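(* Assume in addition that the link SNRs form an $m$-th order Markov chain: the joint density factorizes as $f(\boldsymbol\gamma_1,\dots,\boldsymbol\gamma_K)=\prod_{k=1}^K f_{\boldsymbol\gamma_k}(\boldsymbol\gamma_k\mid\boldsymbol\gamma_{k-m},\dots,\boldsymbol\gamma_{k-1})$ (indices $\le0$ omitted). Then, in the recursion for the value functions $J_{k,\phi}$ of Problem P1, the terminal equations $J_{K,1}=I^{-1}(b^D_K)/\gamma^{SD}_K$, $J_{K,2}=I^{-1}(b^D_K)/\tilde\gamma_K$, $J_{k,\mathsf T}=0$ hold, and for $k=1,\dots,K-1$ and $\mathbf{s}_k$ with $b^D_k>0$: $J_{k,1}(\mathbf{s}_k)=\min\{J_{k,1\to2}(\mathbf{s}_k),J_{k,1\to1}(\mathbf{s}_k)\}$, where $J_{k,1\to1}(\mathbf{s}_k)=\inf_{0\le R<\min\{R^{th}_k,b^D_k\}}\Big[\frac{I^{-1}(R)}{\gamma^{SD}_k}+J'(R)\Big]$, $J_{k,1\to2}(\mathbf{s}_k)=\min_{\min\{R^{th}_k,b^D_k\}\le R\le b^D_k}\Big[\frac{I^{-1}(R)}{\gamma^{SD}_k}+J''(R)\Big]$, and $J_{k,2}(\mathbf{s}_k)=\min_{0\le R\le b^D_k}\Big[\frac{I^{-1}(R)}{\tilde\gamma_k}+J'''(R)\Big]$, with (infimum over the empty set being $+\infty$) $J'(R)=\mathbb{E}[J_{k+1,1}(\boldsymbol\gamma_{k+1},b^R_k-g_k(R),b^D_k-R)\mid\boldsymbol\gamma_{k-m+1},\dots,\boldsymbol\gamma_k]$,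 $J''(R)=\mathbb{E}[J_{k+1,2}(\boldsymbol\gamma_{k+1},b^R_k-g_k(R),b^D_k-R)\mid\boldsymbol\gamma_{k-m+1},\dots,\boldsymbol\gamma_k]$, $J'''(R)=\mathbb{E}[J_{k+1,2}(\boldsymbol\gamma_{k+1},b^R_k,b^D_k-R)\mid\boldsymbol\gamma_{k-m+1},\dots,\boldsymbol\gamma_k]$, $g_k(x)=I\big(I^{-1}(x)\gamma^{SR}_k/\gamma^{SD}_k\big)$, and $R^{th}_k=I\big(I^{-1}(b^R_k)\gamma^{SD}_k/\gamma^{SR}_k\big)$. Here $R$ is the mutual information delivered to the destination in slot $k$ (i.e. $R=I(p_k\gamma^{SD}_k)$ in Phase 1 and $R=I(p_k\tilde\gamma_k)$ in Phase 2), and by convention $J_{k+1,\phi}(\boldsymbol\gamma,b^R,b^D)=0$ whenever $b^D\le 0$. In particular the value functions depend on the past SNRs only through $\boldsymbol\gamma_{k-m+1},\dots,\boldsymbol\gamma_k$.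
   Context: Notation: $I(x)=\log(1+x)$ for $x\ge0$, $I^{-1}(x)=e^x-1$. There are $K\ge1$ slots and a message of $B>0$ nats. In slot $k$ the link SNRs are $\boldsymbol\gamma_k=(\gamma^{SR}_k,\gamma^{SD}_k,\gamma^{RD}_k)$, all a.s. strictly positive; $\tilde\gamma_k=\max(\gamma^{SD}_k,\gamma^{RD}_k)$. Problem P1: one power $p_k\ge0$ per slot; $b^R_1=b^D_1=B$; if $b^R_k>0$ (Phase 1) then $b^R_{k+1}=b^R_k-I(p_k\gamma^{SR}_k)$, $b^D_{k+1}=b^D_k-I(p_k\gamma^{SD}_k)$; if $b^R_k\le0$ (Phase 2) then $b^R_{k+1}=b^R_k$, $b^D_{k+1}=b^D_k-I(p_k\tilde\gamma_k)$. Phase $\phi_k=\mathsf T$ if $b^D_k\le 0$, else $1$ if $b^R_k>0$, else $2$. Causal CSI $\mathbf{s}_k=(\boldsymbol\gamma_1,\dots,\boldsymbol\gamma_k,b^R_k,b^D_k)$; minimize $\mathbb{E}[\sum_k p_k\mid\mathbf{s}_1]$ over causal policies subject to $b^D_{K+1}\le0$ a.s. Value functions: $J_{k,\mathsf T}\equiv0$; $J_{K,1}(\mathbf s_K)=I^{-1}(b^D_K)/\gamma^{SD}_K$, $J_{K,2}(\mathbf s_K)=I^{-1}(b^D_K)/\tilde\gamma_K$; for $k<K$, $\phi\in\{1,2\}$: $J_{k,\phi}(\mathbf{s}_k)=\inf_{p_k\ge0}\{p_k+\mathbb{E}[J_{k+1,\phi_{k+1}}(\mathbf{s}_{k+1})\mid\phi_k=\phi,\mathbf{s}_k]\}$.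 The minimum expected sum energy of P1 equals $J_{1,1}(\mathbf s_1)$. *)

(* Defs.v *)
From HB Require Import structures.
From mathcomp Require Import all_boot all_order all_algebra.
From mathcomp Require Import all_classical all_reals all_analysis.
Set Implicit Arguments. Unset Strict Implicit. Unset Printing Implicit Defensive.
Import Order.TTheory GRing.Theory Num.Theory.
Local Open Scope classical_set_scope.
Local Open Scope ring_scope.

Section Defs.
Variable R : realType.

Definition snr := (R * R * R)%type.
Definition gSR (g : snr) : R := g.1.1.
Definition gSD (g : snr) : R := g.1.2.
Definition gRD (g : snr) : R := g.2.
Definition gtl (g : snr) : R := Num.max (gSD g) (gRD g).
Definition snr_pos (g : snr) : bool := [&& 0 < gSR g, 0 < gSD g & 0 < gRD g].

Definition cur (h : seq snr) : snr := last (0, 0, 0) h.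

Definition I (x : R) : R := ln (1 + x).
Definition Iinv (x : R) : R := expR x - 1.

(* Q k h : conditional law of gamma_{k+1} given (gamma_1,...,gamma_k) = h
           (size h = k).
   Jv n h bR bD = J_{k,phi_k}(s_k) with k = size h, n = K - k remaining
   slots after slot k, s_k = (h, bR, bD), current SNR gamma_k = last h,
   and the phase phi_k determined by (bR, bD). *)
Fixpoint Jv (Q : nat -> seq snr -> probability snr R) (n : nat)
    (h : seq snr) (bR bD : R) {struct n} : \bar R :=
  let g := cur h in
  if bD <= 0 then 0%E                            (* phase T *)
  else match n with
  | 0 => if 0 < bR then (Iinv bD / gSD g)%:E
         else (Iinv bD / gtl g)%:E
  | n'.+1 =>
      if 0 < bR then                             (* phase 1 *)
        ereal_inf [set (p%:E + \int[Q (size h) h]_(x in setT)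
                     Jv Q n' (rcons h x) (bR - I (p * gSR g))
                                         (bD - I (p * gSD g)))%E
                  | p in [set p : R | 0 <= p]]
      else                                       (* phase 2 *)
        ereal_inf [set (p%:E + \int[Q (size h) h]_(x in setT)
                     Jv Q n' (rcons h x) bR (bD - I (p * gtl g)))%E
                  | p in [set p : R | 0 <= p]]
  end.

Definition gk (g : snr) (x : R) : R := I (Iinv x * gSR g / gSD g).
Definition Rth (g : snr) (bR : R) : R := I (Iinv bR * gSD g / gSR g).

End Defs.

(* Main.v *)
Require Import Defs.
From HB Require Import structures.
From mathcomp Require Import all_boot all_order all_algebra.
From mathcomp Require Import all_classical all_reals all_analysis.
From mathcomp Require Import zify.
Import Order.TTheory GRing.Theory Num.Theory.
Local Open Scope classical_set_scope.
Local Open Scope ring_scope.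

Section H.
Variable R : realType.

Lemma Jv_T Q n (h : seq (snr R)) bR bD : bD <= 0 -> Jv Q n h bR bD = 0%E.
Proof. by move=> H; case: n => [|n] /=; rewrite H. Qed.

Lemma int_Jv0 Q (mu : probability (snr R) R) n h bR bD : bD <= 0 ->
  (\int[mu]_(x in setT) Jv Q n (rcons h x) bR bD)%E = 0%E.
Proof.
move=> H; rewrite (eq_integral (fun=> 0%E)); first exact: integral0.
by move=> x _; rewrite Jv_T.
Qed.

Lemma IIinv (r : R) : I (Iinv r) = r.
Proof. by rewrite /I /Iinv addrC subrK expRK. Qed.

Lemma IinvI (x : R) : 0 <= x -> Iinv (I x) = x.
Proof.
move=> H; rewrite /I /Iinv lnK; first by rewrite addrC addKr.
by rewrite posrE (lt_le_trans ltr01) // lerDl.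
Qed.

Lemma I_ge0 (x : R) : 0 <= x -> 0 <= I x.
Proof. by move=> H; rewrite /I ln_ge0 // lerDl. Qed.

Lemma reparam (c bD : R) (G : R -> \bar R) : 0 < c -> 0 < bD ->
  (forall r, bD <= r -> G r = G bD) ->
  ereal_inf [set (p%:E + G (I (p * c)))%E | p in [set p : R | 0 <= p]] =
  ereal_inf [set ((Iinv r / c)%:E + G r)%E | r in [set r : R | 0 <= r <= bD]].
Proof.
move=> c0 bD0 HG; apply/eqP; rewrite eq_le; apply/andP; split.
- apply: le_ereal_inf => _ [r /andP[r0 rb] <-].
  exists (Iinv r / c) => /=.
    by rewrite divr_ge0 ?(ltW c0) // /Iinv subr_ge0 -expR0 ler_expR.
  by rewrite divfK ?gt_eqF // IIinv.
- apply: le_ereal_inf_tmp => _ [p /= p0 <-].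
  have r0 : 0 <= I (p * c) by apply: I_ge0; rewrite mulr_ge0 // ltW.
  case: (leP (I (p * c)) bD) => rb.
    apply: ereal_inf_lbound; exists (I (p * c)); first by rewrite /= r0 rb.
    by rewrite IinvI ?mulfK ?gt_eqF // mulr_ge0 // ltW.
  apply: (@le_trans _ _ ((Iinv bD / c)%:E + G bD)%E).
    by apply: ereal_inf_lbound; exists bD => //=; rewrite lexx ltW.
  rewrite (HG _ (ltW rb)) leeD2r // lee_fin ler_pdivrMr //.
  rewrite -[X in _ <= X](@IinvI (p * c)) ?mulr_ge0 ?(ltW c0) //.
  by rewrite /Iinv lerD2r ler_expR ltW.
Qed.

Lemma inf_split (F : R -> \bar R) (S1 S2 : set R) :
  Order.min (ereal_inf [set F r | r in S2]) (ereal_inf [set F r | r in S1]) =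
  ereal_inf [set F r | r in S1 `|` S2].
Proof.
apply/eqP; rewrite eq_le; apply/andP; split.
- apply: le_ereal_inf_tmp => _ [r [H1|H2] <-]; rewrite ge_min.
    by apply/orP; right; apply: ereal_inf_lbound; exists r.
  by apply/orP; left; apply: ereal_inf_lbound; exists r.
- rewrite le_min; apply/andP; split; apply: le_ereal_inf => _ [r H <-].
    by exists r => //; right.
  by exists r => //; left.
Qed.

Lemma drop_step (m k : nat) (h h' : seq (snr R)) x : (0 < m)%N ->
  size h = k -> size h' = k -> drop (k - m) h = drop (k - m) h' ->
  drop (k.+1 - m) (rcons h x) = drop (k.+1 - m) (rcons h' x).
Proof.
move=> m0 sh sh' hd.
case: (leqP m k) => mk.
  have E : (k.+1 - m = 1 + (k - m))%N by lia.
  rewrite E !drop_rcons ?sh ?sh' ?size_drop; try lia.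
  by rewrite -!drop_drop hd.
have E1 : (k.+1 - m = 0)%N by lia.
have E2 : (k - m = 0)%N by lia.
by move: hd; rewrite E1 E2 !drop0 => ->.
Qed.

Lemma cur_drop (m k : nat) (h h' : seq (snr R)) : (0 < m)%N -> (0 < k)%N ->
  size h = k -> size h' = k -> drop (k - m) h = drop (k - m) h' ->
  cur h = cur h'.
Proof.
move=> m0 k0 sh sh' hd; rewrite /cur.
rewrite -(cat_take_drop (k - m) h) -(cat_take_drop (k - m) h') !last_cat hd.
case E: (drop (k - m) h') => [|z t] //.
by move: (congr1 size E); rewrite size_drop sh' /=; lia.
Qed.

Lemma cur_pos (h : seq (snr R)) : (0 < size h)%N -> all (@snr_pos R) h ->
  snr_pos (cur h).
Proof.
case: h => [|y t] //= _ /andP[Hy Ht]; rewrite /cur /=.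
have := mem_last y t; rewrite inE => /orP[/eqP ->|Hm] //.
by move/allP: Ht => /(_ _ Hm).
Qed.

Lemma markov (K m : nat) (Q Qm : nat -> seq (snr R) -> probability (snr R) R) :
  (0 < m)%N ->
  (forall k h, size h = k -> Q k h = Qm k (drop (k - m) h)) ->
  forall n k h h', (0 < k)%N -> size h = k -> size h' = k ->
  drop (k - m) h = drop (k - m) h' ->
  forall bR bD, Jv Q n h bR bD = Jv Q n h' bR bD.
Proof.
move=> m0 HQ n; elim: n => [|n IH] k h h' k0 sh sh' hd bR bD.
  by rewrite /= (cur_drop _ _ _ _ m0 k0 sh sh' hd).
pose B (g : snr R) (mu : probability (snr R) R) (F : snr R -> R -> R -> \bar R) :=
  if bD <= 0 then 0%E else
  if 0 < bR then
        ereal_inf [set (p%:E + \int[mu]_(x in setT)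
                     F x (bR - I (p * gSR g))%R (bD - I (p * gSD g))%R)%E
                  | p in [set p : R | 0 <= p]]
      else
        ereal_inf [set (p%:E + \int[mu]_(x in setT)
                     F x bR (bD - I (p * gtl g))%R)%E
                  | p in [set p : R | 0 <= p]].
change (B (cur h) (Q (size h) h) (fun x => Jv Q n (rcons h x)) =
        B (cur h') (Q (size h') h') (fun x => Jv Q n (rcons h' x))).
rewrite (cur_drop _ _ _ _ m0 k0 sh sh' hd) sh sh' (HQ k h sh) (HQ k h' sh') hd.
congr B; apply: funext => x; apply: funext => a; apply: funext => b.
apply: (IH k.+1) => //; rewrite ?size_rcons ?sh ?sh' //.
exact: drop_step.
Qed.
End H.

Theorem theorem2 (R : realType) (K m : nat)
  (Q : nat -> seq (snr R) -> probability (snr R) R)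
  (Qm : nat -> seq (snr R) -> probability (snr R) R) :
  (0 < K)%N -> (0 < m)%N ->
  (* the SNRs are a.s. strictly positive *)
  (forall k h, Q k h [set g | snr_pos g] = 1%E) ->
  (* m-th order Markov property: the conditional law of gamma_{k+1} given
     gamma_1..gamma_k is Qm k applied to gamma_{k-m+1}..gamma_k *)
  (forall k h, size h = k -> Q k h = Qm k (drop (k - m) h)) ->
  [/\
   (* terminal equations *)
   (forall h bR bD, size h = K -> 0 < bD -> 0 < bR ->
      Jv Q 0 h bR bD = (Iinv bD / gSD (cur h))%:E) /\
   (forall h bR bD, size h = K -> 0 < bD -> bR <= 0 ->
      Jv Q 0 h bR bD = (Iinv bD / gtl (cur h))%:E),
   (* J_{k,T} = 0 *)
   (forall k h bR bD, (1 <= k <= K)%N -> size h = k -> bD <= 0 ->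
      Jv Q (K - k) h bR bD = 0%E),
   (* phase 1 recursion *)
   (forall k h bR bD, (1 <= k < K)%N -> size h = k -> all (@snr_pos R) h ->
      0 < bD -> 0 < bR ->
      let g := cur h in
      let mu := Qm k (drop (k - m) h) in
      let J' := fun r => (\int[mu]_(x in setT)
                  Jv Q (K - k.+1) (rcons h x) (bR - gk g r) (bD - r))%E in
      let J'' := fun r => (\int[mu]_(x in setT)
                  Jv Q (K - k.+1) (rcons h x) (bR - gk g r) (bD - r))%E in
      let th := Num.min (Rth g bR) bD in
      let J11 := ereal_inf [set ((Iinv r / gSD g)%:E + J' r)%E
                           | r in [set r : R | 0 <= r < th]] in
      let J12 := ereal_inf [set ((Iinv r / gSD g)%:E + J'' r)%E
                           | r in [set r : R | th <= r <= bD]] in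
      Jv Q (K - k) h bR bD = Order.min J12 J11),
   (* phase 2 recursion *)
   (forall k h bR bD, (1 <= k < K)%N -> size h = k -> all (@snr_pos R) h ->
      0 < bD -> bR <= 0 ->
      let g := cur h in
      let mu := Qm k (drop (k - m) h) in
      let J''' := fun r => (\int[mu]_(x in setT)
                  Jv Q (K - k.+1) (rcons h x) bR (bD - r))%E in
      Jv Q (K - k) h bR bD =
        ereal_inf [set ((Iinv r / gtl g)%:E + J''' r)%E
                  | r in [set r : R | 0 <= r <= bD]])
   &
   (* value functions depend on the past only through the last m SNRs *)
   (forall k h h', (1 <= k <= K)%N -> size h = k -> size h' = k ->
      drop (k - m) h = drop (k - m) h' ->
      forall bR bD, Jv Q (K - k) h bR bD = Jv Q (K - k) h' bR bD)].
Proof.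
move=> K0 m0 Hpos HQ; split.
- split => h bR bD _ bD0 bR0 /=.
    by rewrite leNgt bD0 /= bR0.
  by rewrite leNgt bD0 /= ltNge bR0.
- by move=> k h bR bD _ _ H; exact: Jv_T.
- move=> k h bR bD /andP[k1 kK] hs hpos bD0 bR0 g mu J' J'' th J11 J12.
  have gp : snr_pos g by apply: cur_pos; rewrite ?hs.
  move: gp; rewrite /snr_pos => /and3P[gSR0 gSD0 gRD0].
  rewrite (_ : (K - k = (K - k.+1).+1)%N); last by rewrite subnSK.
  rewrite /= leNgt bD0 /= bR0 hs (HQ _ _ hs) -/mu -/g.
  have th0 : 0 <= th.
    rewrite /th le_min (ltW bD0) andbT /Rth; apply: I_ge0.
    rewrite mulr_ge0 ?invr_ge0 ?(ltW gSR0) // mulr_ge0 ?(ltW gSD0) //.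
    by rewrite /Iinv subr_ge0 -expR0 ler_expR ltW.
  have thb : th <= bD by rewrite /th ge_min lexx orbT.
  rewrite (_ : J12 = ereal_inf [set ((Iinv r / gSD g)%:E + J' r)%E
                           | r in [set r : R | th <= r <= bD]]) //.
  rewrite /J11 inf_split.
  rewrite (_ : [set r | 0 <= r < th] `|` [set r | th <= r <= bD] =
               [set r : R | 0 <= r <= bD]); last first.
    apply/seteqP; split => r /=.
      case=> /andP[H1 H2]; apply/andP; split => //.
        exact: ltW (lt_le_trans H2 thb).
      exact: le_trans th0 H1.
    move=> /andP[H1 H2]; case: (ltP r th) => H3.
      by left; rewrite H1.
    by right; apply/andP.
  transitivity (ereal_inf [set (p%:E + J' (I (p * gSD g)))%E | p in [set p : R | 0 <= p]]); last first.
    apply: reparam => // r Hr; rewrite /J' !int_Jv0 // subr_le0 // lexx.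
  congr ereal_inf; apply: eq_imagel => p /= p0.
  rewrite /J' /gk IinvI ?mulr_ge0 ?(ltW gSD0) //.
  by rewrite (mulrAC p) mulfK ?gt_eqF.
- move=> k h bR bD /andP[k1 kK] hs hpos bD0 bR0 g mu J'''.
  have gp : snr_pos g by apply: cur_pos; rewrite ?hs.
  move: gp; rewrite /snr_pos => /and3P[gSR0 gSD0 gRD0].
  have gt0 : 0 < gtl g by rewrite /gtl lt_max gSD0.
  rewrite (_ : (K - k = (K - k.+1).+1)%N); last by rewrite subnSK.
  rewrite /= leNgt bD0 /= ltNge bR0 /= hs (HQ _ _ hs) -/mu -/g.
  transitivity (ereal_inf [set (p%:E + J''' (I (p * gtl g)))%E | p in [set p : R | 0 <= p]]); first by [].
  apply: reparam => // r Hr; rewrite /J''' !int_Jv0 // subr_le0 // lexx.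
- move=> k h h' /andP[k1 kK] hs hs' hd bR bD.
  exact: (@markov R K m Q Qm m0 HQ _ k h h' k1 hs hs' hd).
Qed.
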